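(* Let $G=(V,E)$ be a finite graph with no isolated vertices, with adjacency matrix $A$, degree matrix $D=\mathrm{diag}(d_u)$ and Laplacian $L=D-A$. Let $\boldsymbol\beta,\boldsymbol\gamma,\boldsymbol\lambda\in\mathbb R^V$ be such that $G$ has local $(\boldsymbol\beta,\boldsymbol\gamma,\boldsymbol\lambda)$-occupancy and for all $u\in V$: \[ \beta_u,\gamma_u,\lambda_u>0,\qquad d_u\frac{\gamma_u}{\beta_u}<1,\qquad \sum_{v\in N(u)}\frac{\gamma_v}{\beta_v}\le 1. \] Let $B=\mathrm{diag}(\boldsymbol\beta)$, $\Gamma=\mathrm{diag}(\boldsymbol\gamma)$ and $H=B+D\Gamma$. Then $B+A\Gamma$ is invertible, the vector $\mathbf y'=(B+A\Gamma)^{-1}\mathbf 1$ satisfies $\mathbf y'\ge\mathbf 0$ and $(B+A\Gamma)\mathbf y'\le\mathbf 1$ (i.e. it is feasible for the LP $\max\{\mathbf 1^{\mathsf T}\mathbf y:\ \mathbf y\ge\mathbf 0,\ (B+A\Gamma)\mathbf y\le\mathbf 1\}$), and moreover the spectral radius satisfies $\rho(L\Gamma H^{-1})<1$.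
   Context: Given $\boldsymbol\beta,\boldsymbol\gamma,\boldsymbol\lambda\in[0,\infty)^V$, $G$ has local $(\boldsymbol\beta,\boldsymbol\gamma,\boldsymbol\lambda)$-occupancy if for each $u\in V$, $\beta_u\Pr_{G,\boldsymbol\lambda}(u\in X)+\gamma_u\sum_{v\in N_G(u)}\Pr_{G,\boldsymbol\lambda}(v\in X)\ge1$, where $X$ is drawn from the hard-core model $\Pr_{G,\boldsymbol\lambda}(I)\propto\prod_{v\in I}\lambda_v$ on independent sets $I$ of $G$. Vector inequalities are entrywise; $\rho(T)$ is the maximum absolute value of an eigenvalue of $T$. *)

(* Defs.v *)
From HB Require Import structures.
From mathcomp Require Import all_boot all_order all_algebra.
From mathcomp Require Import complex.
Set Implicit Arguments. Unset Strict Implicit. Unset Printing Implicit Defensive.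
Import Order.TTheory GRing.Theory Num.Theory.
Local Open Scope ring_scope.

Definition simple_graph n (adj : rel 'I_n) : Prop :=
  symmetric adj /\ irreflexive adj.

Definition nbhd n (adj : rel 'I_n) (u : 'I_n) : {set 'I_n} := [set v | adj u v].
Definition deg n (adj : rel 'I_n) (u : 'I_n) : nat := #|nbhd adj u|.

Definition independent n (adj : rel 'I_n) (I : {set 'I_n}) : bool :=
  [forall u in I, forall v in I, ~~ adj u v].

Definition hc_weight (R : numFieldType) n (lam : 'I_n -> R) (I : {set 'I_n}) : R :=
  \prod_(v in I) lam v.
Definition hc_Z (R : numFieldType) n (adj : rel 'I_n) (lam : 'I_n -> R) : R :=
  \sum_(I : {set 'I_n} | independent adj I) hc_weight lam I.
Definition hc_prob (R : numFieldType) n (adj : rel 'I_n) (lam : 'I_n -> R) (u : 'I_n) : R :=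
  (\sum_(I : {set 'I_n} | independent adj I && (u \in I)) hc_weight lam I)
  / hc_Z adj lam.

Definition local_occupancy (R : numFieldType) n (adj : rel 'I_n)
  (beta gamma lam : 'I_n -> R) : Prop :=
  forall u, beta u * hc_prob adj lam u
            + gamma u * \sum_(v in nbhd adj u) hc_prob adj lam v >= 1.

Definition adjmx (R : numFieldType) n (adj : rel 'I_n) : 'M[R]_n :=
  \matrix_(i, j) (adj i j)%:R.
Definition degmx (R : numFieldType) n (adj : rel 'I_n) : 'M[R]_n :=
  \matrix_(i, j) ((i == j)%:R * (deg adj i)%:R).
Definition diagf (R : numFieldType) n (f : 'I_n -> R) : 'M[R]_n :=
  \matrix_(i, j) ((i == j)%:R * f i).

Definition spectral_radius_lt1 (R : rcfType) n (T : 'M[R]_n) : Prop :=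
  forall z : R[i], eigenvalue (map_mx (fun x : R => x%:C%C) T) z -> `|z| < 1.

(* Main.v *)
Require Import Defs.
From HB Require Import structures.
From mathcomp Require Import all_boot all_order all_algebra.
From mathcomp Require Import complex.
From mathcomp Require Import ring lra.
Import Order.TTheory GRing.Theory Num.Theory.
Local Open Scope ring_scope.

Lemma eig_lt1 (C : numDomainType) n (T : 'M[C]_n) (c : 'I_n -> C)
  (v : 'rV[C]_n) (a : C) :
  (forall w, 0 < c w) -> (forall u, \sum_w c w * `|T u w| < c u) ->
  v *m T = a *: v -> v != 0 -> `|a| < 1.
Proof.
move=> cpos hrow hv vnz.
have [u0 hu0] : exists u0, v 0 u0 != 0.
  apply/existsP; apply: contraR vnz; rewrite negb_exists => /forallP h.
  by apply/eqP/matrixP=> i j; rewrite ord1 mxE; apply/eqP/negPn/h.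
set S := \sum_w c w * `|v 0 w|.
have Spos : 0 < S.
  rewrite /S (bigD1 u0) //=.
  apply: (lt_le_trans (y := c u0 * `|v 0 u0|)).
    by rewrite mulr_gt0 ?normr_gt0.
  rewrite lerDl.
  apply: sumr_ge0 => i _.
  by apply: mulr_ge0; [exact: ltW | exact: normr_ge0].
rewrite -(ltr_pM2r Spos) mul1r.
have -> : `|a| * S = \sum_w c w * `|\sum_u v 0 u * T u w|.
  rewrite /S mulr_sumr; apply: eq_bigr => w _.
  have := congr1 (fun M : 'M[C]_(1,n) => M 0 w) hv; rewrite !mxE => ->.
  by rewrite normrM mulrCA.
apply: (le_lt_trans (y := \sum_u `|v 0 u| * \sum_w c w * `|T u w|)).
  apply: (le_trans (y := \sum_w c w * \sum_u `|v 0 u| * `|T u w|)).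
    apply: ler_sum => w _; apply: ler_wpM2l; first exact: ltW.
    apply: le_trans; first exact: ler_norm_sum.
    by apply: ler_sum => u _; rewrite normrM.
  rewrite (eq_bigr (fun w => \sum_u c w * (`|v 0 u| * `|T u w|))); last first.
    by move=> w _; rewrite mulr_sumr.
  rewrite exchange_big /=; apply: ler_sum => u _.
  rewrite mulr_sumr; apply: ler_sum => w _.
  by rewrite mulrCA.
rewrite /S [X in _ < X](bigD1 u0) //= (bigD1 u0) //=.
apply: ltr_leD.
  by rewrite mulrC ltr_pM2r ?normr_gt0.
apply: ler_sum => u _; rewrite mulrC ler_wpM2r //.
exact/ltW.
Qed.

Lemma clip_pos (R : realFieldType) n (N : 'I_n -> 'I_n -> R) (z : 'I_n -> R) :
  (forall u v, 0 <= N u v) -> (forall u, \sum_v N u v <= 1) ->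
  (forall v, \sum_u N u v < 1) ->
  (forall u, z u + \sum_v N u v * z v = 1) -> forall u, 0 <= z u.
Proof.
move=> N0 Nr Nc hz.
pose cl (x : R) : R := if x < 0 then 0 else if 1 < x then 1 else x.
have cl01 x : 0 <= cl x <= 1.
  rewrite /cl; case: ifPn => h1; first by rewrite lexx ler01.
  case: ifPn => h2; first by rewrite lexx ler01.
  by rewrite -!leNgt in h1 h2 *; rewrite h1 h2.
have clnear x t : 0 <= t <= 1 -> `|cl x - x| <= `|t - x|.
  move=> /andP[t0 t1]; rewrite /cl; case: ifPn => h1.
    rewrite sub0r normrN ltr0_norm // ger0_norm; first lra.
    lra.
  case: ifPn => h2.
    rewrite -leNgt in h1.
    rewrite ler0_norm; last lra.
    rewrite ler0_norm; last lra.
    lra.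
  by rewrite subrr normr0.
pose e u := `|cl (z u) - z u|.
have e0 u : 0 <= e u by rewrite /e normr_ge0.
have he u : e u <= \sum_v N u v * e v.
  pose t := 1 - \sum_v N u v * cl (z v).
  have t01 : 0 <= t <= 1.
    have s0 : 0 <= \sum_v N u v * cl (z v).
      by apply: sumr_ge0 => v _; rewrite mulr_ge0 //; case/andP: (cl01 (z v)).
    have s1 : \sum_v N u v * cl (z v) <= 1.
      apply: le_trans (Nr u); apply: ler_sum => v _.
      by rewrite ler_piMr //; case/andP: (cl01 (z v)).
    rewrite /t; apply/andP; split; lra.
  apply: le_trans (clnear _ _ t01) _.
  have -> : t - z u = \sum_v N u v * (z v - cl (z v)).
    have := hz u; rewrite /t => hzu.
    have -> : z u = 1 - \sum_v N u v * z v by rewrite -hzu addrK.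
    transitivity (\sum_v N u v * z v - \sum_v N u v * cl (z v)); first by lra.
    by rewrite -sumrB; apply: eq_bigr => v _; rewrite mulrBr.
  apply: le_trans (ler_norm_sum _ _ _) _; apply: ler_sum => v _.
  by rewrite normrM ger0_norm // /e distrC.
have hsum : \sum_v (1 - \sum_u N u v) * e v = 0.
  apply/le_anti/andP; split; last first.
    by apply: sumr_ge0 => v _; rewrite mulr_ge0 // subr_ge0 ltW.
  have : \sum_u e u <= \sum_v (\sum_u N u v) * e v.
    apply: le_trans (ler_sum _ (fun u _ => he u)) _.
    rewrite exchange_big /=; apply: ler_sum => v _.
    by rewrite mulr_suml.
  move=> H; under eq_bigr do rewrite mulrBl mul1r.
  rewrite sumrB; lra.
have hnn : forall w, xpredT w -> 0 <= (1 - \sum_u N u w) * e w.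
  by move=> w _; rewrite mulr_ge0 // subr_ge0 ltW.
have ez v : e v = 0.
  have := psumr_eq0P hnn hsum (i:=v) isT.
  move/eqP; rewrite mulf_eq0 => /orP[|/eqP //].
  by rewrite subr_eq0 => /eqP h; have := Nc v; rewrite -h ltxx.
move=> u; have := ez u; rewrite /e => /eqP; rewrite normr_eq0 subr_eq0 => /eqP <-.
by case/andP: (cl01 (z u)).
Qed.

Lemma diagfE (R : numFieldType) n (f : 'I_n -> R) : diagf f = diag_mx (\row_j f j).
Proof.
apply/matrixP=> i j; rewrite !mxE; case: eqP => [->|_].
  by rewrite mul1r mulr1n.
by rewrite mul0r mulr0n.
Qed.

Lemma diagf_mul (R : numFieldType) n (f g : 'I_n -> R) :
  diagf f *m diagf g = diagf (fun i => f i * g i).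
Proof.
rewrite !diagfE mulmx_diag; congr diag_mx; apply/rowP=> j; by rewrite !mxE.
Qed.

Lemma diagf_add (R : numFieldType) n (f g : 'I_n -> R) :
  diagf f + diagf g = diagf (fun i => f i + g i).
Proof. by apply/matrixP=> i j; rewrite !mxE mulrDr. Qed.

Lemma eq_diagf (R : numFieldType) n (f g : 'I_n -> R) :
  (forall i, f i = g i) -> diagf f = diagf g.
Proof. by move=> h; apply/matrixP=> i j; rewrite !mxE h. Qed.

Lemma diagf1 (R : numFieldType) n : diagf (fun _ : 'I_n => 1 : R) = 1%:M.
Proof. by apply/matrixP=> i j; rewrite !mxE mulr1. Qed.

Lemma invmx_diagf (R : numFieldType) n (f : 'I_n -> R) :
  (forall i, f i != 0) -> invmx (diagf f) = diagf (fun i => (f i)^-1).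
Proof.
move=> hf.
have h1 : diagf f *m diagf (fun i => (f i)^-1) = 1%:M.
  rewrite diagf_mul -diagf1; apply: eq_diagf => i; exact: mulfV.
have [u1 _] := mulmx1_unit h1.
by rewrite -[RHS](mulKmx u1) h1 mulmx1.
Qed.

Lemma mul_diagf_entry (R : numFieldType) n (X : 'M[R]_n) (f : 'I_n -> R) i j :
  (X *m diagf f) i j = X i j * f j.
Proof. by rewrite diagfE mul_mx_diag !mxE. Qed.

Lemma sum_adj1 (R : numFieldType) n (adj : rel 'I_n) u :
  \sum_w ((adj u w)%:R : R) = (deg adj u)%:R.
Proof.
rewrite /deg -sumr_const [RHS]big_mkcond /=. apply: eq_big => // w _.
by rewrite /nbhd inE; case: (adj u w).
Qed.

Lemma sum_adj (R : numFieldType) n (adj : rel 'I_n) u (f : 'I_n -> R) :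
  \sum_w (adj u w)%:R * f w = \sum_(w in nbhd adj u) f w.
Proof.
rewrite [RHS]big_mkcond /=; apply: eq_big => // w _.
by rewrite /nbhd inE; case: (adj u w); rewrite ?mul1r ?mul0r.
Qed.

Lemma normC_real (R : rcfType) (x : R) : `|x%:C%C| = (`|x|)%:C%C.
Proof. by rewrite normc_def /= expr0n /= addr0 sqrtr_sqr. Qed.

Theorem lemma2p3 (R : rcfType) (n : nat) (adj : rel 'I_n)
  (beta gamma lam : 'I_n -> R) :
  simple_graph adj ->
  (forall u, (0 < deg adj u)%N) ->
  local_occupancy adj beta gamma lam ->
  (forall u, 0 < beta u) -> (forall u, 0 < gamma u) -> (forall u, 0 < lam u) ->
  (forall u, (deg adj u)%:R * (gamma u / beta u) < 1) ->
  (forall u, \sum_(v in nbhd adj u) gamma v / beta v <= 1) ->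
  let A := adjmx R adj in
  let D := degmx R adj in
  let L := D - A in
  let B := diagf beta in
  let Gam := diagf gamma in
  let H := B + D *m Gam in
  let y := invmx (B + A *m Gam) *m const_mx 1 : 'cV[R]_n in
  [/\ (B + A *m Gam) \in unitmx,
      (forall i, 0 <= y i 0),
      (forall i, ((B + A *m Gam) *m y) i 0 <= 1)
    & spectral_radius_lt1 (L *m Gam *m invmx H)].
Proof.
move=> [sym irr] dpos occ bpos gpos lpos hd hs A D L B Gam H y.
have bnz i : beta i != 0 by rewrite gt_eqF.
have gnz i : gamma i != 0 by rewrite gt_eqF.
have Ae u w : A u w = (adj u w)%:R by rewrite mxE.
have A0 u w : 0 <= A u w by rewrite Ae ler0n.
have hd' u : (deg adj u)%:R < beta u / gamma u.
  have := hd u; rewrite mulrA ltr_pdivrMr // mul1r => h.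
  by rewrite ltr_pdivlMr.
have unitM : (B + A *m Gam) \in unitmx.
  rewrite unitmxE unitfE; apply/negP => /det0P [v vnz hv].
  pose T := A *m Gam *m diagf (fun i => (beta i)^-1).
  have hT : v *m T = (-1) *: v.
    have hB : B *m diagf (fun i => (beta i)^-1) = 1%:M.
      rewrite diagf_mul -diagf1; apply: eq_diagf => i; exact: mulfV.
    have e1 : v *m (A *m Gam) = - (v *m B).
      by apply/eqP; rewrite -addr_eq0 addrC -mulmxDr hv.
    by rewrite /T mulmxA e1 mulNmx -mulmxA hB mulmx1 scaleN1r.
  have := @eig_lt1 R n T (fun w => beta w / gamma w) v (-1) _ _ hT vnz.
  rewrite normrN normr1 ltxx; move=> Hc; suff: false by []; apply: Hc.
    by move=> w; rewrite divr_gt0.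
  move=> u.
  have -> : \sum_w beta w / gamma w * `|T u w| = \sum_w (adj u w)%:R.
    apply: eq_bigr => w _.
    rewrite /T /Gam !mul_diagf_entry ger0_norm; last first.
      by apply: mulr_ge0; [apply: mulr_ge0 => //; exact: ltW | rewrite invr_ge0; exact: ltW].
    rewrite Ae; field; apply/andP; split; by [].
  by rewrite sum_adj1.
have My : (B + A *m Gam) *m y = const_mx 1 by rewrite /y mulKVmx.
split => //; last first.
- move=> zc /eigenvalueP [v hv vnz].
  pose h := fun i => beta i + (deg adj i)%:R * gamma i.
  have hpos i : 0 < h i.
    have := bpos i; have := gpos i; have : 0 <= ((deg adj i)%:R : R) by [].
    rewrite /h; nra.
  have HE : H = diagf h.
    apply/matrixP=> i j; rewrite /H /Gam mxE mul_diagf_entry !mxE.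
    case: eqP => [->|_]; rewrite ?eqxx ?mul1r ?mul0r ?addr0 //.
  have Tentry u w : (L *m Gam *m invmx H) u w = L u w * gamma w * (h w)^-1.
    rewrite HE invmx_diagf; last by move=> i; rewrite gt_eqF.
    by rewrite /Gam !mul_diagf_entry.
  have := @eig_lt1 R[i] n (map_mx (fun x => x%:C%C) (L *m Gam *m invmx H))
     (fun w => (h w / gamma w)%:C%C) v zc _ _ hv vnz; apply.
  + by move=> w; rewrite ltcR divr_gt0.
  + move=> u.
    under eq_bigr do rewrite mxE normC_real -rmorphM.
    rewrite -rmorph_sum ltcR.
    have -> : \sum_w h w / gamma w * `|(L *m Gam *m invmx H) u w| = \sum_w `|L u w|.
      apply: eq_bigr => w _; rewrite Tentry !normrM (ger0_norm (ltW (gpos w))).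
      rewrite (ger0_norm (x := (h w)^-1)); last by rewrite invr_ge0 ltW.
      field; apply/andP; split; rewrite gt_eqF //.
    apply: (le_lt_trans (y := (deg adj u)%:R + (deg adj u)%:R)).
      apply: (le_trans (y := \sum_w (D u w + A u w))).
        apply: ler_sum => w _.
        have Le : L u w = D u w - A u w by rewrite /L !mxE.
        rewrite Le; apply: le_trans; first exact: ler_normB.
        rewrite (ger0_norm (A0 u w)) ger0_norm // mxE mulr_ge0 //.
      rewrite big_split /=; apply: lerD; last first.
        by rewrite (eq_bigr _ (fun w _ => Ae u w)) sum_adj1.
      rewrite (bigD1 u) //= big1 ?addr0.
        by rewrite mxE eqxx mul1r.
      by move=> w /negbTE; rewrite mxE eq_sym => ->; rewrite mul0r.
    rewrite ltr_pdivlMr // /h; have := hd' u; rewrite ltr_pdivlMr // => hh.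
    lra.
- by move=> i; rewrite My mxE.
- move=> i.
  have hz u : beta u * y u 0 + \sum_v (A u v * gamma v / beta v) * (beta v * y v 0) = 1.
    have e : ((B + A *m Gam) *m y) u 0 = 1 by rewrite My mxE.
    rewrite -[RHS]e mulmxDl [RHS]mxE; congr (_ + _).
      by rewrite /B diagfE mul_diag_mx !mxE.
    rewrite mxE; apply: eq_bigr => v _; rewrite /Gam mul_diagf_entry; field; exact: bnz.
  have := @clip_pos R n (fun u v => A u v * gamma v / beta v) (fun u => beta u * y u 0) _ _ _ hz i.
  rewrite pmulr_rge0 //; apply.
  + by move=> u v; apply: mulr_ge0; [apply: mulr_ge0 => //; exact: ltW | rewrite invr_ge0; exact: ltW].
  + move=> u; apply: le_trans (hs u); rewrite -sum_adj; apply: ler_sum => v _.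
    by rewrite Ae mulrA.
  + move=> v; have := hd v.
    have -> : \sum_u A u v * gamma v / beta v = (deg adj v)%:R * (gamma v / beta v).
      rewrite -sum_adj1 mulr_suml; apply: eq_bigr => u _.
      by rewrite Ae (sym u v) mulrA.
    by [].
Qed.
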